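(* Let $G$ be a connected graph with $E(G)\neq\emptyset$, and let $x,y\in V(G)$ be distinct vertices such that $G+xy$ has no cutvertex. Then there exists an $x$--$y$ bond $F$ in $G$ such that $\mathrm{pw}(G-y;x)\le 3|F|-2$; moreover, if $G$ itself has no cutvertex, then $F$ can be chosen so that $\mathrm{pw}(G-y;x)\le 3|F|-3$.
   Context: A bond of a graph $G$ is an inclusion-wise minimal set of edges $F$ such that $G-F$ has more connected components than $G$. For distinct vertices $x,y$, an $x$--$y$ bond is a bond $F$ such that $x$ and $y$ lie in different components of $G-F$. $G+xy$ denotes $G$ with the edge $xy$ added (if not already present). A path-decomposition of $H$ is a sequence $(X_0,\dots,X_s)$ of subsets of $V(H)$ such that for each vertex $v$ the indices $i$ with $v\in X_i$ form a non-empty interval, and each edge has both ends in some $X_i$; its width is $\max_i|X_i|-1$. For $x\in V(H)$, $\mathrm{pw}(H;x)$ denotes the minimum width of a path-decomposition $(X_0,\dots,X_s)$ of $H$ with $x\in X_0$. *)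

(* Defs.v *)
(* Finite simple graphs: a vertex set V : {set T} inside a
   finType T, with a symmetric irreflexive adjacency relation e : rel T
   (only edges between vertices of V count). *)
From mathcomp Require Import all_boot.
From mathcomp Require Import boolp.

Set Implicit Arguments.
Unset Strict Implicit.
Unset Printing Implicit Defensive.

Section Graphs.
Variable T : finType.

Definition adj (V : {set T}) (e : rel T) : rel T :=
  [rel u v | [&& u \in V, v \in V & e u v]].

Definition comps (V : {set T}) (e : rel T) : {set {set T}} :=
  [set [set w in V | connect (adj V e) u w] | u in V].
Definition ncomp (V : {set T}) (e : rel T) : nat := #|comps V e|.

Definition connected (V : {set T}) (e : rel T) : Prop := ncomp V e = 1.

Definition edges (V : {set T}) (e : rel T) : {set {set T}} :=
  [set [set u; v] | u in V, v in V & e u v].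

Definition delE (e : rel T) (F : {set {set T}}) : rel T :=
  [rel u v | e u v && ([set u; v] \notin F)].

Definition addE (e : rel T) (x y : T) : rel T :=
  [rel u v | [|| e u v, (u == x) && (v == y) | (u == y) && (v == x)]].

Definition cutvertex (V : {set T}) (e : rel T) (v : T) : Prop :=
  v \in V /\ ncomp V e < ncomp (V :\ v) e.

Definition is_bond (V : {set T}) (e : rel T) (F : {set {set T}}) : Prop :=
  [/\ F \subset edges V e,
      ncomp V e < ncomp V (delE e F) &
      forall F' : {set {set T}}, F' \proper F ->
        ~ (ncomp V e < ncomp V (delE e F'))].

Definition xy_bond (V : {set T}) (e : rel T) (x y : T) (F : {set {set T}}) : Prop :=
  is_bond V e F /\ ~~ connect (adj V (delE e F)) x y.

Definition path_decomp (V : {set T}) (e : rel T) (X : seq {set T}) : Prop :=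
  [/\ 0 < size X,
      all (fun B : {set T} => B \subset V) X,
      forall v, v \in V -> exists i j, i <= j < size X /\
          forall k, k < size X -> (v \in nth set0 X k) = (i <= k <= j) &
      forall u v, u \in V -> v \in V -> e u v ->
        exists2 i, i < size X & (u \in nth set0 X i) && (v \in nth set0 X i)].

Definition width (X : seq {set T}) : nat := (foldr maxn 0 [seq #|B| | B : {set T} <- X]).-1.

Definition pw_le (V : {set T}) (e : rel T) (x : T) : pred nat :=
  fun k => `[< exists X, [/\ path_decomp V e X, x \in head set0 X & width X <= k] >].

(* pw(H; x): minimum width of a path-decomposition with x in X_0
   (defined as 0 in the degenerate case where none exists, i.e. x \notin V) *)
Definition pw (V : {set T}) (e : rel T) (x : T) : nat :=
  match pselect (exists k, pw_le V e x k) with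
  | left h => ex_minn h
  | right _ => 0
  end.

End Graphs.

(* Main.v *)
Require Import Defs.
From mathcomp Require Import all_boot.
From mathcomp Require Import boolp zify.
Set Implicit Arguments. Unset Strict Implicit. Unset Printing Implicit Defensive.

Section Aux.
Variable T : finType.
Implicit Types (S A : {set T}) (g : rel T).

Definition connG S g := forall a b, a \in S -> b \in S -> connect (adj S g) a b.

Lemma adj_sym S g : symmetric g -> symmetric (adj S g).
Proof. by move=> sg u v; rewrite /adj /= sg; case: (u \in S); case: (v \in S). Qed.

Lemma connect_cross g (P : pred T) r d :
  connect g r d -> P r -> ~~ P d -> exists p q, [/\ g p q, P p & ~~ P q].
Proof.
case/connectP=> s pth ->; elim: s r pth => [|z s IH] r /=; first by move=> _ ->.
case/andP=> grz pth Pr nPl; case Pz: (P z); first by apply: (IH z pth).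

by exists r, z; rewrite Pz.
Qed.

Lemma connect_restr g g' r d : connect g r d ->
  (forall p q, g p q -> connect g q d -> g' p q) -> connect g' r d.
Proof.
case/connectP=> s pth dE H; elim: s r pth dE => [|z s IH] r /=; first by move=> _ ->; exact: connect0.
case/andP=> grz pth dE; apply: connect_trans (IH _ pth dE).
apply: connect1; apply: (H _ _ grz); apply/connectP; by exists s.
Qed.

Lemma connect_out S g u w : u \notin S -> connect (adj S g) u w -> u = w.
Proof.
move=> uS /connectP [[|z s] /= pth ->] //.
by move: pth; rewrite /adj /= (negbTE uS).
Qed.

Lemma connect_mono S S' g g' :
  (forall p q, p \in S -> q \in S -> g p q -> adj S' g' p q) ->
  forall u w, connect (adj S g) u w -> connect (adj S' g') u w.
Proof.
move=> H; apply: connect_sub => p q /and3P[pS qS gpq]; apply: connect1; exact: H.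
Qed.

Lemma ncomp_le1_conn S g : ncomp S g <= 1 -> connG S g.
Proof.
move=> /card_le1_eqP H a b aS bS.
have Ca : [set w in S | connect (adj S g) a w] \in comps S g by apply: imset_f.
have Cb : [set w in S | connect (adj S g) b w] \in comps S g by apply: imset_f.
have := H _ _ Ca Cb => /setP /(_ b); rewrite !inE bS connect0 /=.
by move <-.
Qed.

Lemma conn_ncomp_le1 S g : connG S g -> ncomp S g <= 1.
Proof.
move=> H; apply/card_le1_eqP => C1 C2 /imsetP[u1 u1S ->] /imsetP[u2 u2S ->].
apply/setP => w; rewrite !inE; case wS: (w \in S) => //=.
apply/idP/idP => h; apply: connect_trans h; exact: H.
Qed.

Lemma ncomp_ge2 S g a b : a \in S -> b \in S -> ~~ connect (adj S g) a b -> 1 < ncomp S g.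
Proof.
move=> aS bS nab; apply/card_gt1P.
exists [set w in S | connect (adj S g) a w], [set w in S | connect (adj S g) b w].
split; try by apply: imset_f.
apply/negP => /eqP /setP /(_ b); rewrite !inE bS connect0 /=.
by move=> h; move: nab; rewrite h.
Qed.

Lemma max_lt (I : finType) (P : pred I) (F : I -> nat) n :
  0 < n -> (forall i, P i -> F i < n) -> \max_(i | P i) F i < n.
Proof.
move=> n0 H; rewrite -(prednK n0) ltnS; apply/bigmax_leqP => i Pi.
by rewrite -ltnS prednK //; exact: H.
Qed.

Lemma foldr_max_le (l : seq nat) m : (forall a, a \in l -> a <= m) -> foldr maxn 0 l <= m.
Proof.
elim: l => [|a l IH] H //=; rewrite geq_max H ?mem_head //=.
by apply: IH => b bl; apply: H; rewrite in_cons bl orbT.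
Qed.

Lemma pw_leP S g (z : T) k : pw_le S g z k -> pw S g z <= k.
Proof.
rewrite /pw => h; case: pselect => [hh | nh] //.
by case: ex_minnP => m _; apply.
Qed.

End Aux.
Section Main.
Variables (T : finType) (V : {set T}) (e : rel T) (x y : T).
Hypotheses (se : symmetric e) (xV : x \in V) (yV : y \in V) (xy : x != y)
  (nc1 : ncomp V e = 1) (conn : connG V e) (hcv : forall z, z \in V -> connG (V :\ z) (addE e x y)).

Definition good (A : {set T}) :=
  [/\ x \in A, y \notin A, A \subset V, connG A e & connG (V :\: A) e].

Lemma cross_add z (S : {set T}) r d : z \in V -> d \in V :\ z -> d \notin S -> r \in S ->
  S \subset V :\ z -> x \notin S -> y \notin S ->
  exists p q, [/\ p \in S, q \in V :\ z, q \notin S & e p q].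
Proof.
move=> zV dV dS rS SV xS yS.
have rV : r \in V :\ z by apply: (subsetP SV).
have := connect_cross (P := mem S) (hcv zV rV dV) rS dS.
case=> p [q [/and3P [pV qV epq] pS qS]]; exists p, q; split=> //.
case/or3P: epq => // /andP [/eqP pE _]; subst p.
  by move: xS; rewrite -[x \in S]/(mem S x) pS.
by move: yS; rewrite -[y \in S]/(mem S y) pS.
Qed.

Definition R A u := [set w in (V :\: A) :\ u | ~~ connect (adj ((V :\: A) :\ u) e) w y].
Definition cand A u := [&& u \in V :\: A, u != y & [exists a in A, e u a]].

Lemma symadj S : symmetric (adj S e).
Proof. exact: adj_sym. Qed.

Lemma csym S a b : connect (adj S e) a b = connect (adj S e) b a.
Proof. exact: (sym_connect_sym (symadj S)). Qed.

Lemma next A : good A -> (V :\: A) :\ y != set0 -> exists v, cand A v /\ R A v = set0.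
Proof.
case=> xA yA AV cA cH /set0Pn [h hH].
have HV : (V :\: A) :\ y \subset V :\ y.
  by apply/subsetP => w; rewrite !inE => /and3P [-> _ ->].
have [u0 cu0] : exists u, cand A u.
  have [p [q [pS qV qS epq]]] := @cross_add y ((V :\: A) :\ y) h x yV
    ltac:(by rewrite !inE xV xy) ltac:(by rewrite !inE xA /= andbF) hH HV
    ltac:(by rewrite !inE xA /= andbF) ltac:(by rewrite !inE eqxx).
  exists p.
  move: pS qV qS; rewrite !inE => /and3P [py pA pV] /andP [qu qV'] qS.
  rewrite /cand !inE py pA pV /=; apply/existsP; exists q; rewrite epq andbT.
  by move: qS; rewrite qu qV' andbT /= negbK.
suff : forall n u, cand A u -> #|R A u| <= n -> exists v, cand A v /\ R A v = set0.
  by move=> H; apply: (H _ u0 cu0).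
elim=> [|n IH] u cu.
  by rewrite leqn0 cards_eq0 => /eqP Re; exists u.
have [Re | /set0Pn [r rR]] := eqVneq (R A u) set0; first by move=> _; exists u.
move=> Rn.
case/and3P: cu => uH uy /existsP [a /andP [aA eua]].
have uV : u \in V by move: uH; rewrite inE => /andP [].
set H := V :\: A.
(* find p in R u adjacent to A *)
have yR : y \notin R A u by rewrite inE connect0 andbF.
have [p [q [pR qV qR epq]]] : exists p q, [/\ p \in R A u, q \in V :\ u, q \notin R A u & e p q].
  apply: (cross_add uV _ yR rR _ _ yR).
  - by rewrite !inE eq_sym uy yV.
  - by apply/subsetP => w; rewrite !inE => /andP [/and3P [wu _ wV] _]; rewrite wu wV.
  - by rewrite !inE xA /= andbF.
have pHu : p \in H :\ u by move: pR; rewrite inE => /andP [].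
have npy : ~~ connect (adj (H :\ u) e) p y by move: pR; rewrite inE => /andP [].
have qA : q \in A.
  apply/negPn/negP => qnA.
  have qHu : q \in H :\ u by move: qV; rewrite !inE qnA => /andP [-> ->].
  have cqy : connect (adj (H :\ u) e) q y.
    by move: qR; rewrite inE qHu /= negbK.
  move/negP: npy; apply; apply: connect_trans cqy; apply: connect1.
  by rewrite /adj /= pHu qHu epq.
have cp : cand A p.
  move: pHu; rewrite /cand !inE => /andP [_ /andP [-> ->]] /=.
  apply/andP; split.
    by apply/negP => /eqP pE; move: pR; rewrite pE (negbTE yR).
  by apply/existsP; exists q; rewrite qA epq.
apply: (IH p cp).
(* R p is a strict subset of R u *)
have R1 : forall z, connect (adj (H :\ u) e) z y -> connect (adj (H :\ p) e) z y.
  move=> z czy; apply: (connect_restr czy) => p1 q1 /and3P [p1H q1H e1] cq1.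
  have cp1 : connect (adj (H :\ u) e) p1 y.
    by apply: connect_trans cq1; apply: connect1; rewrite /adj /= p1H q1H e1.
  have p1p : p1 != p by apply/negP => /eqP E; move: npy; rewrite -E cp1.
  have q1p : q1 != p by apply/negP => /eqP E; move: npy; rewrite -E cq1.
  move: p1H q1H; rewrite /adj /= !in_setD1 p1p q1p e1 => /andP [_ ->] /andP [_ ->].
  done.
have cuy : connect (adj (H :\ p) e) u y.
  have cyu : connect (adj H e) y u by apply: cH => //; rewrite inE yA yV.
  have nPu : ~~ connect (adj (H :\ u) e) u y.
    apply/negP => hc; have := connect_out (S := H :\ u) (g := e) _ hc.
    by rewrite in_setD1 eqxx => /(_ isT) E; rewrite E eqxx in uy.
  have [b [c [adbc Pb nPc]]] := connect_cross
      (P := fun z => connect (adj (H :\ u) e) z y) cyu (connect0 _ _) nPu.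
  case/and3P: adbc => bH cH' ebc.
  have {}Pb : connect (adj (H :\ u) e) b y := Pb.
  have {}nPc : ~~ connect (adj (H :\ u) e) c y := nPc.
  have bu : b != u by apply/negP => /eqP E; subst b; rewrite Pb in nPu.
  have cu' : c = u.
    apply/eqP/negPn/negP => cu'; move/negP: nPc; apply.
    apply: connect_trans Pb; apply: connect1.
    by rewrite /adj /= !in_setD1 cu' bu cH' bH se ebc.
  subst c.
  apply: connect_trans (R1 _ Pb); apply: connect1.
  have uH' : u \in H := uH.
  rewrite /adj /= !in_setD1 uH' bH se ebc !andbT /=.
  apply/andP; split.
    by apply/negP => /eqP E; move: pHu; rewrite E in_setD1 eqxx.
  by apply/negP => /eqP E; move: npy; rewrite -E Pb.
have sub : R A p \subset R A u :\ p.
  apply/subsetP => w; rewrite !inE => /andP [/and3P [wp wA wV] nwy].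
  rewrite wp wA wV /= andbT.
  have wu : w != u by apply/negP => /eqP E; move: nwy; rewrite E cuy.
  rewrite wu /=; apply/negP => cwy; move: nwy; rewrite (R1 _ cwy).
  done.
move: Rn; rewrite (cardsD1 p (R A u)) pR add1n ltnS.
exact: leq_trans (subset_leq_card sub).
Qed.


Lemma good_add A v : good A -> cand A v -> R A v = set0 -> good (v |: A).
Proof.
case=> xA yA AV cA cH; case/and3P=> vH vy /existsP [a /andP [aA eva]] Re.
have vV : v \in V by move: vH; rewrite inE => /andP [].
split.
- by rewrite in_setU1 xA orbT.
- by rewrite in_setU1 (eq_sym y) (negbTE vy) (negbTE yA).
- by apply/subsetP => w; rewrite in_setU1 => /orP [/eqP -> | /(subsetP AV)].
- have toa : forall b, b \in v |: A -> connect (adj (v |: A) e) b a.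
    move=> b; rewrite in_setU1 => /orP [/eqP -> | bA].
      by apply: connect1; rewrite /adj /= !in_setU1 eqxx aA orbT eva.
    apply: (connect_mono _ (cA _ _ bA aA)) => p q pA qA epq.
    by rewrite /adj /= !in_setU1 pA qA !orbT.
  move=> b1 b2 h1 h2; apply: connect_trans (toa _ h1) _; rewrite csym; exact: toa.
- have E : V :\: (v |: A) = (V :\: A) :\ v.
    by apply/setP => w; rewrite !inE; case: (w == v); case: (w \in A).
  rewrite E.
  have toy : forall w, w \in (V :\: A) :\ v -> connect (adj ((V :\: A) :\ v) e) w y.
    move=> w hw; have : w \notin R A v by rewrite Re inE.
    by rewrite inE hw /= negbK.
  move=> b1 b2 h1 h2; apply: connect_trans (toy _ h1) _; rewrite csym; exact: toy.
Qed.

Lemma build n A : #|(V :\: A) :\ y| <= n -> good A ->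
  exists t : seq T, (forall z, (z \in t) = (z \in (V :\: A) :\ y)) /\
    forall k, k <= size t -> good (A :|: [set z | index z t < k]).
Proof.
elim: n A => [|n IH] A hn gA; have [E0|ne] := eqVneq ((V :\: A) :\ y) set0.
- exists [::]; split; first by move=> z; rewrite E0 inE in_nil.
  move=> k; rewrite leqn0 => /eqP ->.
  have -> : A :|: [set z | index z [::] < 0] = A by apply/setP=> z; rewrite !inE ltn0 orbF.
  done.
- by move: hn; rewrite leqn0 cards_eq0 (negbTE ne).
- exists [::]; split; first by move=> z; rewrite E0 inE in_nil.
  move=> k; rewrite leqn0 => /eqP ->.
  have -> : A :|: [set z | index z [::] < 0] = A by apply/setP=> z; rewrite !inE ltn0 orbF.
  done.
have [v [cv Re]] := next gA ne.
have gA' := good_add gA cv Re.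
have vin : v \in (V :\: A) :\ y.
  by case/and3P: cv => vH vy _; rewrite in_setD1 vy vH.
have E' : (V :\: (v |: A)) :\ y = ((V :\: A) :\ y) :\ v.
  by apply/setP => w; rewrite !inE; case: (w == v); case: (w \in A); rewrite /= ?andbF.
have [t [mt pt]] := IH (v |: A) ltac:(by move: hn; rewrite E' (cardsD1 v) vin add1n ltnS) gA'.
exists (v :: t); split.
  move=> z; rewrite in_cons mt E' in_setD1.
  by case: (eqVneq z v) => [->|] //=; rewrite vin.
case=> [|k] hk.
  have -> : A :|: [set z | index z (v :: t) < 0] = A by apply/setP=> z; rewrite !inE ltn0 orbF.
  done.
have -> : A :|: [set z | index z (v :: t) < k.+1] = (v |: A) :|: [set z | index z t < k].
  apply/setP => z; rewrite !inE /=.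
  case: (eqVneq v z) => [<-|nz] /=; first by rewrite orbT.
  by rewrite ltnS.
exact: pt.
Qed.

Definition delta (A : {set T}) : {set {set T}} := [set [set u; w] | u in A, w in [set w in V :\: A | e u w]].

Lemma set2C' (a b : T) : [set a; b] = [set b; a].
Proof. by apply/setP => z; rewrite !in_set2 orbC. Qed.

Lemma same_side (A : {set T}) u w : (u \in A) = (w \in A) -> [set u; w] \notin delta A.
Proof.
move=> uw; apply/imset2P => [[a b aA]]; rewrite inE => /andP [bVA eab] E.
have ha : a \in [set u; w] by rewrite E set21.
have hb : b \in [set u; w] by rewrite E set22.
have hu : forall c, c \in [set u; w] -> (c \in A) = (u \in A).
  by move=> c; rewrite in_set2 => /orP [/eqP -> | /eqP ->].
move: bVA; rewrite inE (hu _ hb) -(hu _ ha) aA.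
done.
Qed.

Lemma delE_sym F : symmetric (delE e F).
Proof. by move=> u v; rewrite /delE /= se set2C'. Qed.

Lemma delta_good (A : {set T}) : good A -> xy_bond V e x y (delta A) /\ 0 < #|delta A|.
Proof.
case=> xA yA AV cA cH.
have inD : forall p q, p \in A -> q \in V -> q \notin A -> e p q -> [set p; q] \in delta A.
  by move=> p q pA qV qA epq; apply/imset2P; exists p q => //; rewrite !inE qA qV epq.
have nc : ~~ connect (adj V (delE e (delta A))) x y.
  apply/negP => c.
  have [p [q [/and3P [pV qV /andP [epq nin]] pA qA]]] := connect_cross (P := fun z => z \in A) c xA yA.
  by move: nin; rewrite inD.
split; last first.
  have [p [q [/and3P [pV qV epq] pA qA]]] := connect_cross (P := fun z => z \in A) (conn xV yV) xA yA.
  by apply/card_gt0P; exists [set p; q]; apply: inD.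
split => //; split.
- apply/subsetP => f /imset2P [a b aA]; rewrite inE => /andP [bVA eab] ->.
  move: bVA; rewrite inE => /andP [_ bV].
  by apply/imset2P; exists a b; rewrite ?inE ?(subsetP AV _ aA) ?bV ?eab.
- by rewrite nc1; apply: ncomp_ge2 xV yV nc.
move=> F' /properP [sF' [f fF nf']]; rewrite nc1; apply/negP; rewrite -leqNgt; apply: conn_ncomp_le1.
case/imset2P: fF => a b aA; rewrite inE => /andP [bVA eab] fE.
have aV : a \in V by apply: (subsetP AV).
have bV : b \in V by move: bVA; rewrite inE => /andP [].
have lift : forall S : {set T}, S \subset V -> (forall p q, p \in S -> q \in S -> (p \in A) = (q \in A)) ->
    forall p q, connect (adj S e) p q -> connect (adj V (delE e F')) p q.
  move=> S SV same; apply: connect_mono => p q pS qS epq.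
  rewrite /adj /delE /= (subsetP SV _ pS) (subsetP SV _ qS) epq /=.
  by apply/negP => /(subsetP sF'); apply/negP; apply: same_side; apply: same.
have tox : forall u, u \in V -> connect (adj V (delE e F')) u x.
  move=> u uV; case uA: (u \in A).
    by apply: (lift A AV) (cA _ _ uA xA) => p q -> ->.
  have uH : u \in V :\: A by rewrite inE uA uV.
  apply: connect_trans (lift _ (subsetDl V A) _ _ _ (cH _ _ uH bVA)) _.
    by move=> p q; rewrite !inE => /andP [/negbTE -> _] /andP [/negbTE -> _].
  apply: connect_trans (connect1 _) (lift A AV _ _ _ (cA _ _ aA xA)).
    by rewrite /adj /delE /= aV bV se eab set2C' -fE.
  by move=> p q -> ->.
move=> p q pV qV; apply: connect_trans (tox _ pV) _.
rewrite (sym_connect_sym (adj_sym V (delE_sym F'))); exact: tox.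
Qed.

Section Decomp.
Variable s : seq T.
Hypothesis ms : forall z, (z \in s) = (z \in V :\ y).

Definition Lst v := maxn (index v s) (\max_(w | (w \in V :\ y) && e v w) index w s).
Definition bag k := [set v in V :\ y | index v s <= k <= Lst v].
Definition Xs := mkseq bag (size s).
Definition Ak k := [set z | index z s < k].
Definition Dk (A : {set T}) := [set v in A | [exists w, (w \in V :\: A) && e v w]].

Lemma idx_lt v : v \in V :\ y -> index v s < size s.
Proof. by move=> hv; rewrite index_mem ms. Qed.

Lemma Lst_lt v : v \in V :\ y -> Lst v < size s.
Proof.
move=> hv; rewrite /Lst gtn_max idx_lt //=.
apply: max_lt; first by apply: leq_ltn_trans (idx_lt hv).
by move=> w /andP [hw _]; apply: idx_lt.
Qed.

Lemma nth_Xs k : k < size s -> nth set0 Xs k = bag k.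
Proof. by move=> hk; rewrite /Xs nth_mkseq. Qed.

Lemma decomp : 0 < size s -> path_decomp (V :\ y) e Xs.
Proof.
move=> s0; split.
- by rewrite size_mkseq.
- apply/allP => B /mapP [k _ ->]; apply/subsetP => v; rewrite inE => /andP [] //.
- move=> v hv; exists (index v s), (Lst v); rewrite size_mkseq Lst_lt // andbT leq_maxl.
  split => // k hk; by rewrite nth_Xs // inE hv.
- move=> u v hu hv euv; exists (maxn (index u s) (index v s)).
    by rewrite size_mkseq gtn_max !idx_lt.
  rewrite nth_Xs; last by rewrite gtn_max !idx_lt.
  have k1 : index v s <= Lst u.
    apply: leq_trans (leq_maxr _ _).
    by apply: (@leq_bigmax_cond _ (fun w => (w \in V :\ y) && e u w) (fun w => index w s) v); rewrite hv euv.
  have k2 : index u s <= Lst v.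
    apply: leq_trans (leq_maxr _ _).
    by apply: (@leq_bigmax_cond _ (fun w => (w \in V :\ y) && e v w) (fun w => index w s) u); rewrite hu se euv.
  apply/andP; split; rewrite /bag inE ?hu ?hv /= ?leq_maxl ?leq_maxr /= geq_max ?leq_maxl ?leq_maxr ?k1 ?k2 //.
Qed.

Lemma width_Xs m : (forall k, k < size s -> #|bag k| <= m.+1) -> width Xs <= m.
Proof.
move=> H; rewrite /width.
suff : foldr maxn 0 [seq #|B| | B : {set T} <- Xs] <= m.+1 by case: (foldr _ _ _).
apply: foldr_max_le => a /mapP [B /mapP [k]]; rewrite mem_iota add0n => /andP [_ hk] -> ->.
exact: H.
Qed.

Lemma bag_sub k : k < size s -> bag k \subset nth x s k |: Dk (Ak k).
Proof.
move=> hk; apply/subsetP => v; rewrite inE => /andP [hv /andP [ik kL]].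
have vs : v \in s by rewrite ms.
rewrite in_setU1; case: (eqVneq v (nth x s k)) => //= nv.
have ik' : index v s < k.
  rewrite ltn_neqAle ik andbT; apply/negP => /eqP E; move/negP: nv; apply.
  by rewrite -E nth_index.
have hmax : k <= \max_(w | (w \in V :\ y) && e v w) index w s.
  by move: kL; rewrite /Lst leq_max leqNgt ik' /=.
have [w /andP [/andP [hw evw] kw]] : exists w, ((w \in V :\ y) && e v w) && (k <= index w s).
  apply/existsP; apply: contraT => /existsPn Hn.
  have : \max_(w | (w \in V :\ y) && e v w) index w s < k.
    apply: max_lt; first by apply: leq_ltn_trans ik'.
    by move=> w hw; move: (Hn w); rewrite hw /= -ltnNge.
  by rewrite ltnNge hmax.
rewrite inE !inE ik' /=; apply/existsP; exists w; rewrite evw andbT /Ak !inE -leqNgt kw /=.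
by move: hw; rewrite inE => /andP [].
Qed.

Lemma Dk_card A : #|Dk A| <= #|delta A|.
Proof.
pose f v := [set v; odflt v [pick w | (w \in V :\: A) && e v w]].
have fin : forall v, v \in Dk A -> f v \in delta A /\ odflt v [pick w | (w \in V :\: A) && e v w] \in V :\: A.
  move=> v; rewrite inE => /andP [vA /existsP [w0 hw0]].
  rewrite /f; case: pickP => [w /andP [hw evw] | nw]; last by move: (nw w0); rewrite hw0.
  by split => //; apply/imset2P; exists v w => //; rewrite inE hw evw.
rewrite -(card_in_imset (f := f)).
  by apply: subset_leq_card; apply/subsetP => z /imsetP [v hv ->]; case: (fin v hv).
move=> v1 v2 h1 h2 E.
have : v1 \in f v2 by rewrite -E set21.
rewrite in_set2 => /orP [/eqP // | /eqP E1].
case: (fin v2 h2) => _; rewrite -E1 inE; move: h1; rewrite inE => /andP [-> _].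
done.
Qed.

End Decomp.

Lemma final :
  (exists F, xy_bond V e x y F /\ pw (V :\ y) e x + 2 <= 3 * #|F|) /\
  ((forall v, ~ cutvertex V e v) ->
   exists F, xy_bond V e x y F /\ pw (V :\ y) e x + 3 <= 3 * #|F|).
Proof.
have gx : good [set x].
  split.
  - by rewrite set11.
  - by rewrite in_set1 eq_sym xy.
  - by rewrite sub1set.
  - by move=> a b; rewrite !in_set1 => /eqP -> /eqP ->; exact: connect0.
  - move=> a b ha hb; apply: connect_mono (hcv xV ha hb) => p q pV qV.
    rewrite /adj /= pV qV /=; move: pV qV; rewrite !in_setD1 => /andP [px _] /andP [qx _].
    by rewrite /addE /= (negbTE px) (negbTE qx) /= !andbF !orbF.
have [t [mt pt]] := build (leqnn #|V :\: [set x] :\ y|) gx.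
pose s := x :: t.
have ms : forall z, (z \in s) = (z \in V :\ y).
  move=> z; rewrite in_cons mt; case: (eqVneq z x) => [->|zx] /=.
    by rewrite in_setD1 xV xy.
  by rewrite !inE zx.
have AkE : forall k, k <= size t -> Ak s k.+1 = [set x] :|: [set z | index z t < k].
  move=> k _; apply/setP => z; rewrite /Ak !inE /=.
  case: (eqVneq x z) => [<-|nz] /=; first done.
  by rewrite ltnS.
have gAk : forall k, k <= size t -> good (Ak s k.+1).
  by move=> k hk; rewrite AkE //; apply: pt.
pose f := fun i : 'I_(size t).+1 => #|delta (Ak s i.+1)|.
have [im _ Him] := @arg_maxnP _ (@ord0 (size t)) xpredT f isT.
have gim : good (Ak s im.+1) by apply: gAk; rewrite -ltnS.
have [bF F0] := delta_good gim.
set F := delta (Ak s im.+1) in bF F0.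
have bagb : forall k, k < size s -> #|bag s k| <= (#|Dk (Ak s k)|).+1.
  move=> k hk; apply: leq_trans (subset_leq_card (bag_sub ms hk)) _.
  by rewrite cardsU1 -add1n leq_add2r leq_b1.
have Dk0 : #|Dk (Ak s 0)| = 0.
  apply/eqP; rewrite cards_eq0; apply/eqP/setP => v; rewrite !inE.
  by rewrite ltn0.
have bagF : forall k, k < size s -> #|bag s k| <= #|F|.+1.
  move=> [|k] hk; apply: leq_trans (bagb _ hk) _; first by rewrite Dk0.
  rewrite ltnS; apply: leq_trans (Dk_card _) _.
  have hk' : k < (size t).+1 by move: hk; rewrite /s /= ltnS => /ltnW.
  have := Him (Ordinal hk') isT; rewrite /f /=.
  done.
have pwle : forall m, (forall k, k < size s -> #|bag s k| <= m.+1) -> pw (V :\ y) e x <= m.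
  move=> m hm; apply: pw_leP; apply/asboolP; exists (Xs s); split.
  - by apply: decomp.
  - rewrite /Xs /= /bag inE in_setD1 xV xy /= eqxx /=.
    done.
  - exact: width_Xs.
have pwF := pwle _ bagF.
split.
  by exists F; split => //; lia.
move=> nocv; exists F; split => //.
case: (leqP 2 #|F|) => hF; first by lia.
(* |F| <= 1 : the graph is just the edge xy *)
have t0 : t = [::].
  case Et: t => [//|w t']; exfalso.
  have wt : w \in t by rewrite Et mem_head.
  rewrite mt !inE in wt; case/and3P: wt => wy wx wV.
  have A1 : forall z, (z \in Ak s 1) = (z == x).
    by move=> z; rewrite /Ak inE /= (eq_sym x); case: (z == x).
  have g1 := gAk 0 (leq0n _).
  have [_ D0] := delta_good g1.
  have D1 : #|delta (Ak s 1)| <= 1.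
    have := Him ord0 isT; rewrite /f /= => h0; apply: leq_trans h0 _.
    by rewrite -ltnS.
  have [f0 f0D] := card_gt0P D0.
  case/imset2P: (f0D) => a v aA; have ax : a = x by apply/eqP; rewrite -A1.
  subst a => vin f0E.
  have vx : v != x by rewrite -A1; move: vin; rewrite !inE => /andP [/andP []].
  have vV : v \in V by move: vin; rewrite !inE => /andP [/andP []].
  have exv : e x v by move: vin; rewrite !inE => /andP [_].
  have nob : forall b, b \in V -> b != v -> b != x -> False.
    move=> b bV bv bx; apply: (nocv v); split => //; rewrite nc1.
    apply: (@ncomp_ge2 _ _ _ x b); rewrite ?in_setD1 ?xV ?bV ?bv 1?eq_sym ?vx //.
    apply/negP => c.
    have [p [q [/and3P [pV qV epq] Pp nPq]]] := connect_cross (P := fun z => z == x) c (eqxx x) bx.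
    move: Pp => /eqP Pp; subst p.
    move: qV; rewrite in_setD1 => /andP [qv qV].
    have xqD : [set x; q] \in delta (Ak s 1).
      by apply/imset2P; exists x q; rewrite ?A1 ?eqxx // in_set in_setD A1 nPq qV epq.
    have E : f0 = [set x; q] by move/card_le1_eqP: D1 => H1; apply: H1.
    have : q \in [set x; v] by rewrite -f0E E set22.
    by rewrite in_set2 (negbTE qv) (negbTE nPq).
  case: (eqVneq y v) => [yv | yv].
    by apply: (nob w wV) => //; rewrite -yv.
  by apply: (nob y yV) => //; rewrite eq_sym xy.
have pw0 : pw (V :\ y) e x <= 0.
  apply: pwle => k; rewrite /s t0 /= ltnS leqn0 => /eqP ->.
  by have := bagb 0; rewrite Dk0 /s t0; apply.
by lia.
Qed.

End Main.

Theorem lemma3p4 (T : finType) (V : {set T}) (e : rel T) (x y : T) :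
  symmetric e -> irreflexive e ->
  connected V e -> edges V e != set0 ->
  x \in V -> y \in V -> x != y ->
  (forall v, ~ cutvertex V (addE e x y) v) ->
  (exists F, xy_bond V e x y F /\ pw (V :\ y) e x + 2 <= 3 * #|F|) /\
  ((forall v, ~ cutvertex V e v) ->
   exists F, xy_bond V e x y F /\ pw (V :\ y) e x + 3 <= 3 * #|F|).
Proof.
move=> se ie cn ne xV yV xy ncv.
have nc1 : ncomp V e = 1 := cn.
have conn : connG V e by apply: ncomp_le1_conn; rewrite nc1.
have hcv : forall z, z \in V -> connG (V :\ z) (addE e x y).
  move=> z zV; apply: ncomp_le1_conn.
  have h1 : ncomp V (addE e x y) <= 1.
    apply: conn_ncomp_le1 => a b aV bV; apply: connect_mono (conn _ _ aV bV) => p q pV qV epq.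
    by rewrite /adj /addE /= pV qV epq.
  rewrite leqNgt; apply/negP => h; apply: (ncv z); split => //; exact: leq_ltn_trans h1 h.
exact: (final se xV yV xy nc1 conn hcv).
Qed.
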